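(* Let $\mathbb{F}$ be a field with $\mathrm{char}(\mathbb{F})\neq2$ and let $X$ be a unitary alternative $\mathbb{F}$-algebra with unit $e$. Then the map $\mathrm{Inn}\colon X\to\mathcal{E}(X)$, $x\mapsto(x\cdot-,\,-\cdot x)$, is a bijection (indeed a linear isomorphism compatible with the multiplications). Concretely, every pair $(f*-,-*f)\in\mathcal{E}(X)$ satisfies $f*e=e*f=:\alpha\in X$ and $f*x=\alpha x$, $x*f=x\alpha$ for all $x\in X$, and $\mathrm{Inn}$ has trivial kernel.
   Context: An alternative algebra satisfies $(yx)x=y(xx)$ and $x(xy)=(xx)y$. For an alternative algebra $X$, $\mathcal{E}(X)$ (the external weak actor) is the subspace of all pairs $(f*-,\,-*f)\in\mathrm{End}(X)\times\mathrm{End}(X)$ such that for all $x,y\in X$: $f*(xy)=(x*f)y+(f*x)y-x(f*y)$, $(xy)*f=x(f*y)+x(y*f)-(x*f)y$, $x(y*f)=(yx)*f+(xy)*f-y(x*f)$, $(f*x)y=f*(yx)+f*(xy)-(f*y)x$. It carries the bilinear partial multiplication $\langle(f*-,-*f),(g*-,-*g)\rangle=(h*-,-*h)$ with $h*x=-(f*x)*g+f*(g*x)+f*(x*g)$ and $x*h=(x*f)*g+(f*x)*g-f*(x*g)$, defined whenever the result lies in $\mathcal{E}(X)$. *)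

(* Defs.v *)
(* A (possibly non-associative) F-algebra is an lmodType F
   together with a bilinear multiplication mul. *)
From HB Require Import structures.
From mathcomp Require Import all_boot all_order all_algebra.
Set Implicit Arguments. Unset Strict Implicit. Unset Printing Implicit Defensive.
Import GRing.Theory.
Local Open Scope ring_scope.

Section AltDefs.
Variables (F : fieldType) (X : lmodType F).

Definition is_lin (f : X -> X) : Prop :=
  forall (a : F) (u v : X), f (a *: u + v) = a *: f u + f v.

Definition bilinear_mul (mul : X -> X -> X) : Prop :=
  (forall y, is_lin (fun x => mul x y)) /\ (forall x, is_lin (mul x)).

Definition alternative (mul : X -> X -> X) : Prop :=
  forall x y, mul (mul y x) x = mul y (mul x x) /\
              mul x (mul x y) = mul (mul x x) y.

Definition is_unit_elt (mul : X -> X -> X) (e : X) : Prop :=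
  forall x, mul e x = x /\ mul x e = x.

(* (L, R) = (f*-, -*f) belongs to the external weak actor E(X) *)
Definition in_E (mul : X -> X -> X) (L R : X -> X) : Prop :=
  is_lin L /\ is_lin R /\
  forall x y,
    [/\ L (mul x y) = mul (R x) y + mul (L x) y - mul x (L y),
        R (mul x y) = mul x (L y) + mul x (R y) - mul (R x) y,
        mul x (R y) = R (mul y x) + R (mul x y) - mul y (R x)
      & mul (L x) y = L (mul y x) + L (mul x y) - mul (L y) x].

Definition Inn (mul : X -> X -> X) (x : X) : (X -> X) * (X -> X) :=
  (mul x, fun y => mul y x).

Definition Emul (LR1 LR2 : (X -> X) * (X -> X)) : (X -> X) * (X -> X) :=
  let: (L1, R1) := LR1 in let: (L2, R2) := LR2 in
  (fun x => - R2 (L1 x) + L1 (L2 x) + L1 (R2 x),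
   fun x => R2 (R1 x) + R2 (L1 x) - L1 (R2 x)).

End AltDefs.

(* Main.v *)
Require Import Defs.
From HB Require Import structures.
From mathcomp Require Import all_boot all_order all_algebra.
Import GRing.Theory.
Local Open Scope ring_scope.

Lemma g1 (V : zmodType) (p q r s : V) : p - r + (q - s) = 0 -> s = p + q - r.
Proof. move/eqP; rewrite addrA subr_eq0 => /eqP <-; by rewrite addrAC. Qed.
Lemma g2 (V : zmodType) (p q r s : V) : p - r + (s - q) = 0 -> s = r + q - p.
Proof. rewrite addrC => /eqP; rewrite addr_eq0 subr_eq opprB => /eqP ->. by rewrite addrAC. Qed.
Lemma g3 (V : zmodType) (p q r s : V) : p - r + (q - s) = 0 -> - q + r + s = p.
Proof. move=> /g1 ->. by rewrite addrC -addrA addrACA addNKr subrK. Qed.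
Lemma g4 (V : zmodType) (p q r s : V) : p - r + (q - s) = 0 -> p + q - s = r.
Proof. move/eqP; rewrite addrACA -opprD subr_eq0 => /eqP ->; by rewrite addrK. Qed.

Arguments g1 {V p q r s}. Arguments g2 {V p q r s}. Arguments g3 {V p q r s}. Arguments g4 {V p q r s}.
Lemma addDiff (V : zmodType) (a b c d : V) : (a + b) - (c + d) = (a - c) + (b - d).
Proof. by rewrite opprD addrACA. Qed.

Theorem mainTheorem4 (F : fieldType) (X : lmodType F) (mul : X -> X -> X) (e : X)
  (hchar : (2%:R : F) != 0)
  (hbil : bilinear_mul mul) (halt : alternative mul) (hunit : is_unit_elt mul e) :
  (* Inn is well defined: Inn x lies in E(X) *)
  (forall x : X, in_E mul (Inn mul x).1 (Inn mul x).2) /\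
  (* every element of E(X) is inner: f*e = e*f =: alpha, f*x = alpha x, x*f = x alpha *)
  (forall L R : X -> X, in_E mul L R ->
     L e = R e /\ (forall x, L x = mul (L e) x /\ R x = mul x (L e))) /\
  (* Inn has trivial kernel *)
  (forall x : X, (forall y, mul x y = 0 /\ mul y x = 0) -> x = 0) /\
  (* Inn is linear *)
  (forall (a : F) (x y z : X),
     (Inn mul (a *: x + y)).1 z = a *: (Inn mul x).1 z + (Inn mul y).1 z /\
     (Inn mul (a *: x + y)).2 z = a *: (Inn mul x).2 z + (Inn mul y).2 z) /\
  (* Inn is compatible with the multiplications *)
  (forall x y z : X,
     (Emul (Inn mul x) (Inn mul y)).1 z = (Inn mul (mul x y)).1 z /\
     (Emul (Inn mul x) (Inn mul y)).2 z = (Inn mul (mul x y)).2 z).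
Proof.
case: hbil => hl hr.
have mulDl : forall u v y, mul (u + v) y = mul u y + mul v y.
  by move=> u v y; have := hl y 1 u v; rewrite /= !scale1r.
have mulDr : forall y u v, mul y (u + v) = mul y u + mul y v.
  by move=> y u v; have := hr y 1 u v; rewrite /= !scale1r.
pose as3 a b c := mul (mul a b) c - mul a (mul b c).
have asDl : forall u v b c, as3 (u + v) b c = as3 u b c + as3 v b c.
  by move=> u v b c; rewrite /as3 !mulDl addDiff.
have asDm : forall a u v c, as3 a (u + v) c = as3 a u c + as3 a v c.
  by move=> a u v c; rewrite /as3 mulDr mulDl mulDl mulDr addDiff.
have asDr : forall a b u v, as3 a b (u + v) = as3 a b u + as3 a b v.
  by move=> a b u v; rewrite /as3 !mulDr addDiff.
have asL : forall x y, as3 x x y = 0.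
  by move=> x y; rewrite /as3 (halt x y).2 subrr.
have asR : forall x y, as3 y x x = 0.
  by move=> x y; rewrite /as3 (halt x y).1 subrr.
have A1 : forall a b c, as3 a b c + as3 b a c = 0.
  move=> a b c; have := asL (a + b) c.
  by rewrite asDl !asDm !asL add0r addr0.
have A2 : forall a b c, as3 a b c + as3 a c b = 0.
  move=> a b c; have := asR (b + c) a.
  by rewrite asDm !asDr !asR add0r addr0.
split.
  move=> x /=; split; first by move=> a u v; rewrite hr.
  split; first by move=> a u v; rewrite hl.
  move=> a b; split.
  - exact: (g1 (A1 a x b)).
  - exact: (g2 (A2 a x b)).
  - exact: (g1 (A1 b a x)).
  - exact: (g2 (A2 x b a)).
split.
  move=> L R [lL [lR H]].
  have hLR : L e = R e.
    have [+ _ _ _] := H e e.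
    by rewrite (hunit e).1 (hunit (R e)).2 (hunit (L e)).2 (hunit (L e)).1 addrK.
  have two : forall v w : X, v + v = w + w -> v = w.
    move=> v w E; apply: (scalerI hchar).
    by rewrite !scaler_nat !mulr2n.
  split => // x; split.
    have [+ _ _ _] := H e x.
    rewrite !(hunit x).1 (hunit (L x)).1 -hLR => E.
    by apply: two; rewrite {1}E subrK.
  have [_ + _ _] := H x e.
  rewrite !(hunit x).2 (hunit (R x)).2 -hLR => E.
  by apply: two; rewrite {1}E subrK.
split.
  by move=> x Hx; rewrite -(hunit x).2 (Hx e).1.
split.
  by move=> a x y z /=; rewrite hl hr.
move=> x y z /=; split.
  exact: (g3 (A2 x y z)).
exact: (g4 (A1 z x y)).
Qed.
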